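(* Let $\mathcal{B}\in\mathbb{Z}^{n\times 2}$ have rank $2$ with rows $b_1,\dots,b_n$ summing to zero, and let $I_{\mathcal{B}}$ and $I$ be its lattice ideal and lattice basis ideal. Define $\alpha\in\mathbb{N}^n$ by $\alpha_i=\max_j\nu_{ij}$ if $b_{i1}>0$ and $\alpha_i=0$ otherwise. Then $\partial^{\alpha}I_{\mathcal{B}}\subseteq I$.
   Context: Work in the polynomial ring $\mathbb{C}[\partial_1,\dots,\partial_n]$. $\mathcal{B}=(b_{ji})$ with columns $b^{(1)},b^{(2)}$ and $L_{\mathcal{B}}=\mathcal{B}\mathbb{Z}^2$. For $u\in\mathbb{Z}^n$, $u=u_+-u_-$ with $u_\pm\in\mathbb{N}^n$ of disjoint supports. Lattice ideal: $I_{\mathcal{B}}=\langle\partial^{u_+}-\partial^{u_-}:u\in L_{\mathcal{B}}\rangle$. Lattice basis ideal: $I=\langle\partial^{b^{(1)}_+}-\partial^{b^{(1)}_-},\partial^{b^{(2)}_+}-\partial^{b^{(2)}_-}\rangle$. Index: $\nu_{ij}=\min(|b_{i1}b_{j2}|,|b_{j1}b_{i2}|)$ if $b_i,b_j$ lie in the interiors of opposite quadrants of $\mathbb{Z}^2$, and $0$ otherwise. *)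

(* Defs.v *)
From HB Require Import structures.
From mathcomp Require Import all_boot all_algebra.
From mathcomp Require Import Rstruct complex.
From mathcomp Require Export mpoly.
Set Implicit Arguments. Unset Strict Implicit. Unset Printing Implicit Defensive.
Import GRing.Theory Num.Theory.
Local Open Scope ring_scope.

Definition CC : fieldType := complex Rdefinitions.R.

Definition pospart (z : int) : nat := match z with Posz k => k | Negz _ => 0%N end.
Definition negpart (z : int) : nat := pospart (- z).

Definition uplus n (u : 'cV[int]_n) : 'X_{1..n} := [multinom pospart (u i ord0) | i < n].
Definition uminus n (u : 'cV[int]_n) : 'X_{1..n} := [multinom negpart (u i ord0) | i < n].

(* The binomial d^{u_+} - d^{u_-}. *)
Definition binom_of n (u : 'cV[int]_n) : {mpoly CC[n]} := 'X_[uplus u] - 'X_[uminus u].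

Definition in_ideal n (G : {mpoly CC[n]} -> Prop) (p : {mpoly CC[n]}) : Prop :=
  exists s : seq ({mpoly CC[n]} * {mpoly CC[n]}),
    (forall x, x \in s -> G x.2) /\ p = \sum_(x <- s) x.1 * x.2.

Definition in_lattice n (B : 'M[int]_(n, 2)) (u : 'cV[int]_n) : Prop :=
  exists v : 'cV[int]_2, u = B *m v.

Definition lattice_ideal n (B : 'M[int]_(n, 2)) : {mpoly CC[n]} -> Prop :=
  in_ideal (fun g => exists u, in_lattice B u /\ g = binom_of u).

Definition lattice_basis_ideal n (B : 'M[int]_(n, 2)) : {mpoly CC[n]} -> Prop :=
  in_ideal (fun g => g = binom_of (col ord0 B) \/ g = binom_of (col (@Ordinal 2 1 isT) B)).

Definition opposite_open_quadrants n (B : 'M[int]_(n, 2)) (i j : 'I_n) : bool :=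
  [&& B i ord0 != 0, B i (@Ordinal 2 1 isT) != 0,
      sgz (B j ord0) == - sgz (B i ord0) & sgz (B j (@Ordinal 2 1 isT)) == - sgz (B i (@Ordinal 2 1 isT))].

Definition nu n (B : 'M[int]_(n, 2)) (i j : 'I_n) : nat :=
  if opposite_open_quadrants B i j
  then minn (absz (B i ord0 * B j (@Ordinal 2 1 isT))) (absz (B j ord0 * B i (@Ordinal 2 1 isT)))
  else 0%N.

Definition alpha n (B : 'M[int]_(n, 2)) : 'X_{1..n} :=
  [multinom (if (0 < B i ord0)%R then \max_(j < n) nu B i j else 0%N) | i < n].

(* Main.v *)
Require Import Defs.
From HB Require Import structures.
From mathcomp Require Import all_boot all_order all_algebra.
From mathcomp Require Import zify ring lra.
Import Order.TTheory GRing.Theory Num.Theory.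
Set Implicit Arguments. Unset Strict Implicit. Unset Printing Implicit Defensive.
Local Open Scope ring_scope.


Lemma in_ideal0 n (G : {mpoly CC[n]} -> Prop) : in_ideal G 0.
Proof. by exists [::]; split => //; rewrite big_nil. Qed.

Lemma in_idealD n (G : {mpoly CC[n]} -> Prop) p q :
  in_ideal G p -> in_ideal G q -> in_ideal G (p + q).
Proof.
move=> [s [Hs ->]] [t [Ht ->]]; exists (s ++ t); split; last by rewrite big_cat.
by move=> x; rewrite mem_cat => /orP [] ?; [apply: Hs | apply: Ht].
Qed.

Lemma in_idealM n (G : {mpoly CC[n]} -> Prop) r p :
  in_ideal G p -> in_ideal G (r * p).
Proof.
move=> [s [Hs ->]]; exists [seq (r * x.1, x.2) | x <- s]; split.
  by move=> x /mapP [y Hy ->]; exact: (Hs _ Hy).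
by rewrite big_map mulr_sumr; apply: eq_bigr => x _; rewrite mulrA.
Qed.

Lemma in_idealN n (G : {mpoly CC[n]} -> Prop) p :
  in_ideal G p -> in_ideal G (- p).
Proof. by move=> H; rewrite -mulN1r; apply: in_idealM. Qed.

Lemma in_idealB n (G : {mpoly CC[n]} -> Prop) p q :
  in_ideal G p -> in_ideal G q -> in_ideal G (p - q).
Proof. by move=> Hp Hq; apply: in_idealD => //; apply: in_idealN. Qed.

Lemma in_ideal_gen n (G : {mpoly CC[n]} -> Prop) r g :
  G g -> in_ideal G (r * g).
Proof.
move=> Hg; exists [:: (r, g)]; split; last by rewrite big_seq1.
by move=> x; rewrite inE => /eqP ->.
Qed.

Lemma pos_neg (z : int) : (pospart z)%:Z - (negpart z)%:Z = z /\ (pospart z = 0 \/ negpart z = 0)%N.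
Proof.
case: z => m.
  by case: m => [|m] //=; rewrite /negpart /= ?subr0; split => //; right.
rewrite /negpart /=; split; last by left.
by rewrite sub0r.
Qed.

Definition monz n (z : 'I_n -> int) : {mpoly CC[n]} := 'X_[[multinom absz (z i) | i < n]].

Lemma step n (B : 'M[int]_(n, 2)) (k : 'I_2) (z z' : 'I_n -> int) :
  (forall i, 0 <= z i) -> (forall i, z' i = z i + B i k) -> (forall i, 0 <= z' i) ->
  lattice_basis_ideal B (monz z' - monz z).
Proof.
move=> Hz Hz' Hz'0.
set ym := [multinom (absz (z i) - negpart (B i k))%N | i < n].
have E1 : [multinom absz (z' i) | i < n] = (ym + uplus (col k B))%MM.
  apply/mnmP => i; rewrite mnmDE !mnmE mxE.
  have := Hz i; have := Hz'0 i; rewrite Hz'.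
  have [h1 h2] := pos_neg (B i k). lia.
have E2 : [multinom absz (z i) | i < n] = (ym + uminus (col k B))%MM.
  apply/mnmP => i; rewrite mnmDE !mnmE mxE.
  have := Hz i; have := Hz'0 i; rewrite Hz'.
  have [h1 h2] := pos_neg (B i k). lia.
rewrite /monz E1 E2 !mpolyXD -mulrBr.
apply: in_ideal_gen.
clear ym E1 E2; case: k {Hz'} => [[|[|m]] Hk] //.
  by left; congr (binom_of (col _ B)); apply: val_inj.
by right; congr (binom_of (col _ B)); apply: val_inj.
Qed.

Lemma block (a d x y p q A M : int) : 0 <= A -> 0 <= M -> - (a* p + d*q) <= M ->
  0 <= x -> x + 1 <= p -> 0 <= y -> y <= q ->
  0 <= A + M + a*x + d*y -> A + M + a*(x+1) + d*y < 0 ->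
  [/\ a < 0, 0 < d & y < q].
Proof.
move=> *.
have ha : a < 0 by lia.
have hd : 0 < d.
  have [hd|//] := lerP d 0.
  have : a * p <= a * (x+1) by nia.
  have : d * q <= d * y by nia.
  lia.
split => //.
have [hy|//] := lerP q y.
have hyq : y = q by lia.
have : a * p <= a * (x+1) by nia.
lia.
Qed.

Lemma contra (ak al dk dl x y p q alk all Mk Ml : int) :
  0 < ak -> al < 0 -> dk < 0 -> 0 < dl -> 0 <= x -> x < p -> 0 <= y -> y < q ->
  0 <= all -> 0 <= Mk -> -(ak* p + dk*q) <= Mk -> 0 <= Ml -> -(al* p + dl*q) <= Ml ->
  (ak*dl <= alk \/ al*dk <= alk) ->
  alk + Mk + ak*x + dk*(y+1) < 0 -> all + Ml + al*(x+1) + dl*y < 0 -> False.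
Proof.
move=> hak hal hdk hdl hx hxp hy hyq hall hMk hMk' hMl hMl' halk Hk Hl.
have [hdel|hdel] := lerP (al*dk) (ak*dl).
- have halk' : al*dk <= alk by case: halk => h; lia.
  have e : dl * (ak*x + dk*y) - dk * (al*x + dl*y) = (ak*dl - al*dk) * x by ring.
  have h1 : 0 <= (ak*dl - al*dk) * x by nia.
  have h2 : dl * (ak*x + dk*y) <= dl * (- alk - dk - 1) by nia.
  have h3 : - dk * (al*x + dl*y) <= - dk * (- al - 1) by nia.
  have h4 : dl * alk >= dl * (al * dk) by nia.
  have h5 : 0 <= (-dk)*((-al-1)*(dl-1)) by apply: mulr_ge0; [lia| apply: mulr_ge0; lia].
  lia.
- have halk' : ak*dl <= alk by case: halk => h; lia.
  have e : - al * (ak*(x-p) + dk*(y-q)) + ak * (al*(x-p) + dl*(y-q)) = (al*dk - ak*dl) * (q-y) by ring.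
  have h1 : (al*dk - ak*dl) <= (al*dk - ak*dl) * (q-y) by nia.
  have h2 : - al * (ak*(x-p) + dk*(y-q)) <= - al * (- alk - dk - 1) by nia.
  have h3 : ak * (al*(x-p) + dl*(y-q)) <= ak * (- al - 1) by nia.
  have h4 : al * alk <= al * (ak * dl) by nia.
  have h5 : 0 <= ak*((-al-1)*(dl-1)) by apply: mulr_ge0; [lia| apply: mulr_ge0; lia].
  lia.
Qed.

Notation o1 := (@Ordinal 2 1 isT).

Lemma alpha_ge n (B : 'M[int]_(n,2)) (s : int) k l : (s = 1 \/ s = -1) ->
  0 < B k ord0 -> B l ord0 < 0 -> s * B k o1 < 0 -> 0 < s * B l o1 ->
  B k ord0 * (s * B l o1) <= (alpha B k)%:Z \/ B l ord0 * (s * B k o1) <= (alpha B k)%:Z.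
Proof.
move=> Hs hk0 hl0 hk1 hl1.
have hmax : (nu B k l <= alpha B k)%N by rewrite /alpha mnmE hk0; apply: leq_bigmax.
have hq : opposite_open_quadrants B k l.
  have hk1' : (B k o1 < 0 /\ 0 < B l o1) \/ (0 < B k o1 /\ B l o1 < 0).
    by case: Hs => Hs; subst s; [left|right]; lia.
  apply/and4P; split.
  - by rewrite (gt_eqF hk0).
  - by case: hk1' => [[h _]|[h _]]; [rewrite (lt_eqF h)|rewrite (gt_eqF h)].
  - by rewrite (ltr0_sgz hl0) (gtr0_sgz hk0).
  - by case: hk1' => [[h h']|[h h']]; rewrite ?(ltr0_sgz h) ?(gtr0_sgz h) ?(ltr0_sgz h') ?(gtr0_sgz h').
move: hmax; rewrite /nu hq.
by case: Hs => Hs; subst s; rewrite ?mul1r ?mulN1r => h; lia.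
Qed.

Definition Zf n (B : 'M[int]_(n,2)) (s : int) (U : 'I_n -> int) (x y : nat) : 'I_n -> int :=
  fun i => ((alpha B i + negpart (U i))%N)%:Z + x%:Z * B i ord0 + y%:Z * (s * B i o1).

Lemma greedy n (B : 'M[int]_(n,2)) s U p q x y : (s = 1 \/ s = -1) ->
  (forall i, U i = p%:Z * B i ord0 + q%:Z * (s * B i o1)) ->
  (x <= p)%N -> (y <= q)%N -> (x < p)%N || (y < q)%N -> (forall i, 0 <= Zf B s U x y i) ->
  ((x < p)%N /\ forall i, 0 <= Zf B s U x.+1 y i) \/ ((y < q)%N /\ forall i, 0 <= Zf B s U x y.+1 i).
Proof.
move=> Hs HU Hx Hy Hxy Hz.
have HM i : 0 <= (negpart (U i))%:Z /\ - U i <= (negpart (U i))%:Z.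
  by have [h1 _] := pos_neg (U i); lia.
have [Hr|Hr] := boolP ((x < p)%N && [forall i, 0 <= Zf B s U x.+1 y i]).
  by left; case/andP: Hr => h /forallP.
have [Hu|Hu] := boolP ((y < q)%N && [forall i, 0 <= Zf B s U x y.+1 i]).
  by right; case/andP: Hu => h /forallP.
exfalso.
have Rb : (x < p)%N -> exists l, [/\ B l ord0 < 0, 0 < s * B l o1, (y < q)%N & Zf B s U x.+1 y l < 0].
  move=> hxp; move: Hr; rewrite hxp /= negb_forall => /existsP [l]; rewrite -ltNge => hl.
  have := Hz l; have [h1 h2] := HM l; have := HU l.
  rewrite /Zf in hl * => hU hz.
  have [] := @block (B l ord0) (s * B l o1) x y p q (alpha B l) (negpart (U l)); try lia.
  by move=> ? ? ?; exists l; split => //; lia.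
have Ub : (y < q)%N -> exists k, [/\ 0 < B k ord0, s * B k o1 < 0, (x < p)%N & Zf B s U x y.+1 k < 0].
  move=> hyq; move: Hu; rewrite hyq /= negb_forall => /existsP [k]; rewrite -ltNge => hk.
  have := Hz k; have [h1 h2] := HM k; have := HU k.
  rewrite /Zf in hk * => hU hz.
  have [] := @block (s * B k o1) (B k ord0) y x q p (alpha B k) (negpart (U k)); try lia.
  by move=> ? ? ?; exists k; split => //; lia.
have hxp : (x < p)%N.
  case: (ltnP x p) => // hpx.
  have hyq : (y < q)%N by move: Hxy; rewrite ltnNge hpx.
  by have [k [_ _ h _]] := Ub hyq; rewrite ltnNge hpx in h.
have hyq : (y < q)%N by have [l [_ _ h _]] := Rb hxp.
have [l [hl0 hl1 _ hl]] := Rb hxp.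
have [k [hk0 hk1 _ hk]] := Ub hyq.
have Hal := alpha_ge Hs hk0 hl0 hk1 hl1.
have [h1 h2] := HM k; have [h3 h4] := HM l; have := HU k; have := HU l.
rewrite /Zf in hk hl => hUl hUk.
apply: (@contra (B k ord0) (B l ord0) (s*B k o1) (s*B l o1) x y p q (alpha B k) (alpha B l) (negpart (U k)) (negpart (U l))); first [exact Hal | lia].
Qed.

Lemma path n (B : 'M[int]_(n,2)) s U p q : (s = 1 \/ s = -1) ->
  (forall i, U i = p%:Z * B i ord0 + q%:Z * (s * B i o1)) ->
  forall d x y, ((p - x) + (q - y) = d)%N -> (x <= p)%N -> (y <= q)%N ->
  (forall i, 0 <= Zf B s U x y i) ->
  lattice_basis_ideal B (monz (Zf B s U x y) - monz (Zf B s U p q)).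
Proof.
move=> Hs HU; elim=> [|d IH] x y Hd Hx Hy Hz.
  have -> : x = p by lia.
  have -> : y = q by lia.
  by rewrite subrr; apply: in_ideal0.
have Hxy : (x < p)%N || (y < q)%N.
  by case: (ltnP x p) => //= hpx; case: (ltnP y q) => //= hqy; lia.
have [[Hxp Hz']|[Hyq Hz']] := greedy Hs HU Hx Hy Hxy Hz.
  have H1 := IH x.+1 y ltac:(lia) Hxp Hy Hz'.
  have H2 : lattice_basis_ideal B (monz (Zf B s U x.+1 y) - monz (Zf B s U x y)).
    by apply: (@step _ _ ord0) Hz _ Hz' => i; rewrite /Zf; lia.
  have := in_idealB H1 H2.
  by rewrite opprB addrC addrA subrK.
have H1 := IH x y.+1 ltac:(lia) Hx Hyq Hz'.
have H2 : lattice_basis_ideal B (monz (Zf B s U x y.+1) - monz (Zf B s U x y)).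
  case: Hs => Hs; subst s.
    by apply: (@step _ _ o1) Hz _ Hz' => i; rewrite /Zf; lia.
  have := (@step _ B o1 _ _ Hz' _ Hz).
  move=> H; rewrite -opprB; apply: in_idealN; apply: H => i; rewrite /Zf; lia.
have := in_idealB H1 H2.
by rewrite opprB addrC addrA subrK.
Qed.

Lemma key n (B : 'M[int]_(n,2)) s U p q : (s = 1 \/ s = -1) ->
  (forall i, U i = p%:Z * B i ord0 + q%:Z * (s * B i o1)) ->
  lattice_basis_ideal B ('X_[alpha B + [multinom negpart (U i) | i < n]]
                         - 'X_[alpha B + [multinom pospart (U i) | i < n]]).
Proof.
move=> Hs HU.
have := @path n B s U p q Hs HU (p + q)%N 0%N 0%N ltac:(lia) (leq0n _) (leq0n _).
have E1 : monz (Zf B s U 0 0) = 'X_[alpha B + [multinom negpart (U i) | i < n]].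
  rewrite /monz; congr 'X_[_]; apply/mnmP => i; rewrite mnmDE /Zf; set a := alpha B; rewrite !mnmE; lia.
have E2 : monz (Zf B s U p q) = 'X_[alpha B + [multinom pospart (U i) | i < n]].
  rewrite /monz; congr 'X_[_]; apply/mnmP => i; rewrite mnmDE /Zf; set a := alpha B; rewrite !mnmE.
  have := HU i; have [h1 h2] := pos_neg (U i); lia.
rewrite E1 E2; apply.
by move=> i; rewrite /Zf; lia.
Qed.

Lemma lattice_gen n (B : 'M[int]_(n,2)) u : in_lattice B u ->
  lattice_basis_ideal B ('X_[alpha B] * binom_of u).
Proof.
move=> [v ->]; clear u.
set u := B *m v.
have Hu i : u i ord0 = B i ord0 * v ord0 ord0 + B i o1 * v o1 ord0.
  by rewrite /u mxE !big_ord_recr big_ord0 /= add0r; congr (B i _ * v _ _ + B i _ * v _ _); apply: val_inj.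
rewrite /binom_of mulrBr -!mpolyXD.
have [hP|hP] := lerP 0 (v ord0 ord0).
  pose s : int := if 0 <= v o1 ord0 then 1 else -1.
  have Hs : s = 1 \/ s = -1 by rewrite /s; case: ifP; [left|right].
  have HU : forall i, u i ord0 = (absz (v ord0 ord0))%:Z * B i ord0 + (absz (v o1 ord0))%:Z * (s * B i o1).
    move=> i; rewrite Hu /s !abszE (ger0_norm hP).
    case: ifP => hQ; first by rewrite (ger0_norm hQ); ring.
    have hQ' : v o1 ord0 < 0 by rewrite ltNge hQ.
    by rewrite (ltr0_norm hQ'); ring.
  have := key Hs HU.
  move=> H; have := in_idealN H; rewrite opprB.
  by congr (lattice_basis_ideal _ ('X_[_ + _] - 'X_[_ + _])); apply/mnmP => i; rewrite !mnmE.
pose s : int := if v o1 ord0 <= 0 then 1 else -1.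
have Hs : s = 1 \/ s = -1 by rewrite /s; case: ifP; [left|right].
have HU : forall i, - u i ord0 = (absz (v ord0 ord0))%:Z * B i ord0 + (absz (v o1 ord0))%:Z * (s * B i o1).
  move=> i; rewrite Hu /s !abszE (ltr0_norm hP).
  case: ifP => hQ; first by rewrite (ler0_norm hQ); ring.
  have hQ' : 0 < v o1 ord0 by rewrite ltNge hQ.
  by rewrite (gtr0_norm hQ'); ring.
have := key Hs HU.
congr (lattice_basis_ideal _ ('X_[_ + _] - 'X_[_ + _])); apply/mnmP => i; rewrite !mnmE.
  by rewrite /negpart opprK.
Qed.

Theorem proposition4p4 (n : nat) (B : 'M[int]_(n, 2)) :
  \rank (map_mx (intr : int -> rat) B) = 2%N ->
  \sum_(i < n) row i B = 0 ->
  forall f : {mpoly CC[n]}, lattice_ideal B f ->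
    lattice_basis_ideal B ('X_[alpha B] * f).
Proof.
move=> _ _ f [s0 [Hs0 ->]].
elim: s0 Hs0 => [|x s0 IH] Hs0; first by rewrite big_nil mulr0; apply: in_ideal0.
rewrite big_cons mulrDr; apply: in_idealD; last first.
  by apply: IH => y Hy; apply: Hs0; rewrite inE Hy orbT.
have [u [Hu ->]] := Hs0 x (mem_head _ _).
by rewrite mulrCA; apply: in_idealM; apply: lattice_gen.
Qed.
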